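(* Let $p$ be a prime. Then $2p$ is a GA1 number if and only if $p=2$ or $p>5$.
   Context: For a positive integer $n$, $\sigma(n)=\sum_{d\mid n} d$. For integers $n>1$ define $G(n)=\dfrac{\sigma(n)}{n\log\log n}$ (natural logarithms). A positive integer $n$ is a GA1 number (GA number of the first kind) if $n$ is composite and $G(n)\ge G(n/p)$ for every prime $p$ dividing $n$. *)

(* Defs.v *)
From mathcomp Require Import all_boot.
From Stdlib Require Import Reals.

Definition sigma (n : nat) : nat := (\sum_(d <- divisors n) d)%N.

Definition G (n : nat) : R :=
  (INR (sigma n) / (INR n * ln (ln (INR n))))%R.

Definition composite (n : nat) : Prop := (1 < n)%N /\ ~~ prime n.

Definition GA1 (n : nat) : Prop :=
  composite n /\ forall p : nat, prime p -> (p %| n)%N -> (G (n %/ p) <= G n)%R.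

(* Main.v *)
Require Import Defs.
From mathcomp Require Import all_boot zify.
From Stdlib Require Import Reals.
From Stdlib Require Import Lra Lia Factorial.

Local Open Scope R_scope.
Lemma expm1_bounds : 3678/10000 <= exp (-1) <= 3681/10000.
Proof.
  unfold exp; case (exist_exp (-1)) as (x,e); simpl;
    unfold exp_in in e.
  assert (H := alternated_series_ineq (fun i:nat => / INR (fact i)) x 3).
  assert (H0 : sum_f_R0 (tg_alt (fun i:nat => / INR (fact i))) (S (2 * 3)) <= x <=
      sum_f_R0 (tg_alt (fun i:nat => / INR (fact i))) (2 * 3)).
  2:{ replace (sum_f_R0 (tg_alt (fun i:nat => / INR (fact i))) (S (2 * 3))) with
        (1 - 1 + /2 - /6 + /24 - /120 + /720 - /5040) in H0
        by (unfold tg_alt; simpl; field).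
      replace (sum_f_R0 (tg_alt (fun i:nat => / INR (fact i))) (2 * 3)) with
        (1 - 1 + /2 - /6 + /24 - /120 + /720) in H0
        by (unfold tg_alt; simpl; field).
      lra. }
  apply H.
  - unfold Un_decreasing; intros;
      apply Rmult_le_reg_l with (INR (fact n)).
    { apply INR_fact_lt_0. }
    apply Rmult_le_reg_l with (INR (fact (S n))).
    { apply INR_fact_lt_0. }
    rewrite Rinv_r.
    2:{ apply INR_fact_neq_0. }
    rewrite Rmult_1_r; rewrite Rmult_comm; rewrite Rmult_assoc;
      rewrite Rinv_l.
    2:{ apply INR_fact_neq_0. }
    rewrite Rmult_1_r; apply le_INR; apply fact_le; apply Nat.le_succ_diag_r.
  - assert (H0 := cv_speed_pow_fact 1); unfold Un_cv; unfold Un_cv in H0;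
      intros; elim (H0 _ H1); intros; exists x0; intros;
      unfold Rdist in H2; unfold Rdist;
      replace (/ INR (fact n)) with (1 ^ n / INR (fact n));auto.
    unfold Rdiv; rewrite pow1; rewrite Rmult_1_l; reflexivity.
  - unfold infinite_sum in e; unfold Un_cv, tg_alt; intros; elim (e _ H0);
      intros; exists x0; intros;
      replace (sum_f_R0 (fun i:nat => (-1) ^ i * / INR (fact i)) n) with
      (sum_f_R0 (fun i:nat => / INR (fact i) * (-1) ^ i) n);auto.
    apply sum_eq; intros; apply Rmult_comm.
Qed.

Lemma e_bounds : 27/10 <= exp 1 <= 272/100.
Proof.
  pose proof expm1_bounds as [H1 H2].
  assert (E : exp 1 * exp (-1) = 1).
  { rewrite <- exp_plus. replace (1 + -1) with 0 by ring. apply exp_0. }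
  pose proof (exp_pos 1). split; nra.
Qed.

Lemma ln_le' x y : 0 < x -> x <= y -> ln x <= ln y.
Proof.
  intros Hx Hxy. destruct (Rle_lt_or_eq_dec _ _ Hxy) as [H|H].
  - left. apply ln_increasing; auto.
  - rewrite H. right. reflexivity.
Qed.

Lemma ln_lower a m n : 0 < a -> (272/100)^m <= a^n -> INR m <= INR n * ln a.
Proof.
  intros Ha H. pose proof e_bounds as [E1 E2].
  assert (H1 : exp 1 ^ m <= a ^ n).
  { apply Rle_trans with (2 := H). apply pow_incr. lra. }
  apply ln_le' in H1; [| apply pow_lt, exp_pos].
  rewrite !ln_pow in H1; auto; [| apply exp_pos].
  rewrite ln_exp in H1. lra.
Qed.

Lemma ln_upper a m n : 0 < a -> a^n <= (27/10)^m -> INR n * ln a <= INR m.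
Proof.
  intros Ha H. pose proof e_bounds as [E1 E2].
  assert (H1 : a ^ n <= exp 1 ^ m).
  { apply Rle_trans with (1 := H). apply pow_incr. lra. }
  apply ln_le' in H1; [| apply pow_lt; auto].
  rewrite !ln_pow in H1; auto; [| apply exp_pos].
  rewrite ln_exp in H1. lra.
Qed.

Lemma ln2_lo : 69/100 <= ln 2.
Proof. pose proof (ln_lower 2 69 100 ltac:(lra) ltac:(lra)). simpl INR in H. lra. Qed.
Lemma ln2_hi : ln 2 <= 7/10.
Proof. pose proof (ln_upper 2 7 10 ltac:(lra) ltac:(lra)). simpl INR in H. lra. Qed.
Lemma ln3_lo : 1 < ln 3.
Proof. pose proof e_bounds. rewrite <- (ln_exp 1) at 1. apply ln_increasing. apply exp_pos. lra. Qed.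
Lemma ln3_hi : ln 3 <= 3/2.
Proof. pose proof (ln_upper 3 3 2 ltac:(lra) ltac:(lra)). simpl INR in H. lra. Qed.
Lemma ln5_hi : ln 5 <= 165/100.
Proof. pose proof (ln_upper 5 33 20 ltac:(lra) ltac:(lra)). simpl INR in H. lra. Qed.
Lemma ln7_lo : 19/10 <= ln 7.
Proof. pose proof (ln_lower 7 19 10 ltac:(lra) ltac:(lra)). simpl INR in H. lra. Qed.

Lemma div_le a b c d : 0 < b -> 0 < d -> a * d <= c * b -> a / b <= c / d.
Proof.
  intros Hb Hd H. apply (Rmult_le_reg_r (b * d)); [nra|].
  replace (a / b * (b * d)) with (a * d) by (field; lra).
  replace (c / d * (b * d)) with (c * b) by (field; lra). exact H.
Qed.

Lemma div_lt a b c d : 0 < b -> 0 < d -> a * d < c * b -> a / b < c / d.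
Proof.
  intros Hb Hd H. apply (Rmult_lt_reg_r (b * d)); [nra|].
  replace (a / b * (b * d)) with (a * d) by (field; lra).
  replace (c / d * (b * d)) with (c * b) by (field; lra). exact H.
Qed.

Lemma lnP_gt1 P : 3 <= P -> 1 < ln P.
Proof. intros H. pose proof ln3_lo. pose proof (ln_le' 3 P ltac:(lra) H). lra. Qed.

Lemma ln2P P : 3 <= P -> ln (2 * P) = ln 2 + ln P.
Proof. intros H. apply ln_mult; lra. Qed.

Lemma key_le P : 3 <= P -> (ln (2*P))^2 <= (ln P)^3 ->
  (P+1)/(P*ln(ln P)) <= 3*(P+1)/((2*P)*ln(ln(2*P))).
Proof.
  intros HP H. pose proof (lnP_gt1 P HP) as Hx.
  pose proof ln2_lo as L2. rewrite (ln2P P HP) in H. rewrite (ln2P P HP).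
  set (x := ln P) in *. set (y := ln 2 + x) in *.
  assert (HA : 0 < ln x) by (rewrite <- ln_1; apply ln_increasing; lra).
  assert (HB : 0 < ln y) by (rewrite <- ln_1; apply ln_increasing; unfold y; lra).
  assert (Hl : ln (y^2) <= ln (x^3)) by (apply ln_le'; [apply pow_lt; unfold y; lra | exact H]).
  rewrite (ln_pow x ltac:(lra)) (ln_pow y ltac:(unfold y; lra)) in Hl. simpl INR in Hl.
  apply div_le; [nra|nra|].
  assert (0 <= (P + 1) * P) by nra. nra.
Qed.

Lemma key_lt P : 3 <= P -> (ln P)^3 < (ln (2*P))^2 ->
  3*(P+1)/((2*P)*ln(ln(2*P))) < (P+1)/(P*ln(ln P)).
Proof.
  intros HP H. pose proof (lnP_gt1 P HP) as Hx.
  pose proof ln2_lo as L2. rewrite (ln2P P HP) in H. rewrite (ln2P P HP).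
  set (x := ln P) in *. set (y := ln 2 + x) in *.
  assert (HA : 0 < ln x) by (rewrite <- ln_1; apply ln_increasing; lra).
  assert (HB : 0 < ln y) by (rewrite <- ln_1; apply ln_increasing; unfold y; lra).
  assert (Hl : ln (x^3) < ln (y^2)) by (apply ln_increasing; [apply pow_lt; lra | exact H]).
  rewrite (ln_pow x ltac:(lra)) (ln_pow y ltac:(unfold y; lra)) in Hl. simpl INR in Hl.
  apply div_lt; [nra|nra|].
  assert (0 < (P + 1) * P) by nra. nra.
Qed.

Lemma ineq_big P : 7 <= P -> (ln (2*P))^2 <= (ln P)^3.
Proof.
  intros HP. rewrite (ln2P P ltac:(lra)). pose proof ln2_lo. pose proof ln2_hi.
  pose proof ln7_lo. pose proof (ln_le' 7 P ltac:(lra) HP).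
  set (x := ln P) in *. set (c := ln 2) in *.
  assert (19/10 <= x) by lra.
  assert ((x + c)^2 <= (x + 7/10)^2) by (simpl; nra).
  assert ((x + 7/10)^2 <= x^3) by nra. lra.
Qed.

Lemma ineq_3 : (ln 3)^3 < (ln (2*3))^2.
Proof.
  rewrite (ln2P 3 ltac:(lra)). pose proof ln2_lo. pose proof ln3_lo. pose proof ln3_hi.
  set (x := ln 3) in *. set (c := ln 2) in *.
  assert ((x + 69/100)^2 <= (x + c)^2) by (simpl; nra).
  assert (x^3 < (x + 69/100)^2) by nra. lra.
Qed.

Lemma ineq_5 : (ln 5)^3 < (ln (2*5))^2.
Proof.
  rewrite (ln2P 5 ltac:(lra)). pose proof ln2_lo. pose proof (lnP_gt1 5 ltac:(lra)). pose proof ln5_hi.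
  set (x := ln 5) in *. set (c := ln 2) in *.
  assert ((x + 69/100)^2 <= (x + c)^2) by (simpl; nra).
  assert (x^3 < (x + 69/100)^2) by nra. lra.
Qed.
Local Close Scope R_scope.

Lemma sigma_prime p : prime p -> Defs.sigma p = p.+1.
Proof.
move=> pp.
have Hp : perm_eq (divisors p) [:: 1; p].
  apply: uniq_perm; first exact: divisors_uniq.
    by rewrite /= inE andbT; have := prime_gt1 pp; lia.
  move=> d; rewrite -dvdn_divisors ?prime_gt0 // !inE.
  apply/idP/idP.
    by case/primeP: pp => _ H /H.
  by case/orP=> /eqP ->; rewrite ?dvd1n ?dvdnn.
by rewrite /Defs.sigma (perm_big _ Hp) /= !big_cons big_nil; lia.
Qed.

Lemma dvd2_cases k : k %| 2 -> k = 1 \/ k = 2.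
Proof.
move=> Hk; have := dvdn_leq (isT : 0 < 2) Hk.
by case: k Hk => [|[|[|k]]] //= _ _; [left|right].
Qed.

Lemma sigma_2p p : prime p -> 2 < p -> Defs.sigma (2 * p) = 3 * p.+1.
Proof.
move=> pp p2.
have Hp : perm_eq (divisors (2 * p)) [:: 1; 2; p; 2 * p].
  apply: uniq_perm; first exact: divisors_uniq.
    rewrite /= !inE !negb_or andbT; lia.
  move=> d; rewrite -dvdn_divisors; last lia.
  rewrite !inE.
  apply/idP/idP.
    move=> Hd; case pd: (p %| d).
      move/dvdnP: pd => [k Ek]; move: Hd; rewrite Ek dvdn_pmul2r ?prime_gt0 //.
      by case/dvd2_cases => ->; rewrite ?mul1n eqxx ?orbT.
    have cp : coprime d p by rewrite coprime_sym prime_coprime // pd.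
    move: Hd; rewrite Gauss_dvdl //.
    by case/dvd2_cases => ->; rewrite eqxx ?orbT.
  case/or4P=> /eqP ->; rewrite ?dvd1n ?dvdnn //.
    exact: dvdn_mulr.
  exact: dvdn_mull.
by rewrite /Defs.sigma (perm_big _ Hp) /= !big_cons big_nil; lia.
Qed.

Lemma sigma2 : Defs.sigma 2 = 3. Proof. by rewrite /Defs.sigma unlock. Qed.
Lemma sigma4 : Defs.sigma 4 = 7. Proof. by rewrite /Defs.sigma unlock. Qed.

Lemma INR_muln m n : INR (m * n)%N = (INR m * INR n)%R.
Proof. exact: mult_INR. Qed.

Lemma G_prime p : prime p -> G p = ((INR p + 1) / (INR p * ln (ln (INR p))))%R.
Proof. by move=> pp; rewrite /G sigma_prime // S_INR. Qed.

Lemma G_2p p : prime p -> 2 < p ->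
  G (2*p) = (3 * (INR p + 1) / ((2 * INR p) * ln (ln (2 * INR p))))%R.
Proof.
move=> pp p2; rewrite /G sigma_2p // !INR_muln.
have -> : INR 3 = 3%R by simpl; lra.
have -> : INR 2 = 2%R by simpl; lra.
by rewrite S_INR.
Qed.

Lemma G2_neg : (G 2 < 0)%R.
Proof.
rewrite /G sigma2.
have -> : INR 3 = 3%R by simpl; lra.
have -> : INR 2 = 2%R by simpl; lra.
have h1 := ln2_lo; have h2 := ln2_hi.
have hL : (ln (ln 2) < 0)%R.
  rewrite -ln_1; apply: ln_increasing; lra.
have hI : (/ (2 * ln (ln 2)) < 0)%R by apply: Rinv_lt_0_compat; lra.
rewrite /Rdiv; nra.
Qed.

Lemma G4_pos : (0 < G 4)%R.
Proof.
rewrite /G sigma4.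
have -> : INR 7 = 7%R by simpl; lra.
have -> : INR 4 = 4%R by simpl; lra.
have h1 := ln2_lo.
have E : ln 4 = (ln 2 + ln 2)%R.
  rewrite -ln_mult; [| lra | lra]. by f_equal; lra.
have hL : (0 < ln (ln 4))%R.
  rewrite -ln_1; apply: ln_increasing; lra.
have hI : (0 < / (4 * ln (ln 4)))%R by apply: Rinv_0_lt_compat; lra.
rewrite /Rdiv; nra.
Qed.

Lemma G2p_pos p : prime p -> 2 < p -> (0 <= G (2 * p))%R.
Proof.
move=> pp p2; rewrite G_2p //.
have hP : (3 <= INR p)%R.
  have : (INR 3 <= INR p)%R by apply: le_INR; apply/leP.
  simpl; lra.
have h1 := lnP_gt1 (2 * INR p) ltac:(lra).
have hL : (0 < ln (ln (2 * INR p)))%R.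
  rewrite -ln_1; apply: ln_increasing; lra.
have hI : (0 < / (2 * INR p * ln (ln (2 * INR p))))%R.
  apply: Rinv_0_lt_compat; nra.
rewrite /Rdiv; nra.
Qed.

Lemma prime_div_2p p q : prime p -> prime q -> q %| 2 * p -> q = 2 \/ q = p.
Proof.
move=> pp qq; rewrite Euclid_dvdM // => /orP [] H; [left | right]; apply/eqP.
  by rewrite -(dvdn_prime2 qq (isT : prime 2)).
by rewrite -(dvdn_prime2 qq pp).
Qed.

Theorem proposition3 (p : nat) :
  prime p -> (GA1 (2 * p) <-> p = 2 \/ (5 < p)%N).
Proof.
move=> pp; have p1 := prime_gt1 pp.
have comp : composite (2*p).
  split; first lia.
  apply/negP => H2.
  have := dvdn_prime2 (isT : prime 2) H2.
  rewrite dvdn_mulr // => /esym/eqP; lia.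
split.
  move=> [_ H].
  case: (eqVneq p 2) => [->|p2]; first by left.
  right; have p3 : 2 < p by lia.
  case: (ltnP 5 p) => // hp; exfalso.
  have HG := H 2 isT (dvdn_mulr _ (dvdnn 2)).
  rewrite mulKn // G_prime // G_2p // in HG.
  have : p = 3 \/ p = 4 \/ p = 5 by lia.
  case=> [E|[E|E]]; subst p.
  - have E3 : INR 3 = 3%R by simpl; lra.
    rewrite E3 in HG.
    have := key_lt 3 ltac:(lra) ineq_3; lra.
  - by [].
  - have E5 : INR 5 = 5%R by simpl; lra.
    rewrite E5 in HG.
    have := key_lt 5 ltac:(lra) ineq_5; lra.
case=> [->|hp].
  split; first by [].
  move=> q qq Hq.
  have q2 : q = 2 by case: (prime_div_2p 2 q isT qq Hq).
  subst q.
  change (2 * 2)%N with 4%N.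
  have -> : 4 %/ 2 = 2 by [].
  have := G2_neg; have := G4_pos; lra.
have p2 : 2 < p by lia.
split; first exact: comp.
move=> q qq Hq.
case: (prime_div_2p _ _ pp qq Hq) => ->.
  rewrite mulKn // G_prime // G_2p //.
  have hP : (7 <= INR p)%R.
    have p6 : p != 6 by apply/eqP => E; rewrite E in pp.
    have : (INR 7 <= INR p)%R by apply: le_INR; apply/leP; lia.
    simpl; lra.
  apply: key_le; first lra.
  exact: ineq_big.
rewrite mulnK; last lia.
have := G2_neg; have := G2p_pos _ pp p2; lra.
Qed.
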